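(* Let $q:\mathbb{R}\to\mathbb{R}$ be infinitely differentiable and strictly positive, let $p(t)=\frac1{q(t)}\left(\frac54\left(\frac{q'(t)}{q(t)}\right)^2-\frac{q''(t)}{q(t)}\right)$, and suppose there are real numbers $\eta_1>0$, $\eta_2>0$ with $\eta_1\le q(t)\le\eta_2$, $|p(t)|\le\eta_2$ and $|q'(t)|\le\eta_2$ for all $0\le t\le1$. Let $k=20\left(\frac{\eta_2}{\eta_1}\right)^2+8\eta_2^2+10\frac{\eta_2}{\eta_1}+1$, and let $\epsilon$ be a real number with $0<\epsilon<\eta_1/2$. Suppose $p_b:[0,1]\to\mathbb{R}$ is infinitely differentiable with $\sup_{0\le t\le1}|p(t)-p_b(t)|\le\epsilon e^{-k}$. Then there exists an infinitely differentiable $q_b:[0,1]\to\mathbb{R}$ such that $$\frac1{q_b(t)}\left(\frac54\left(\frac{q_b'(t)}{q_b(t)}\right)^2-\frac{q_b''(t)}{q_b(t)}\right)=p_b(t)\quad\text{for all }0\le t\le1$$ and $\sup_{0\le t\le1}|q(t)-q_b(t)|\le\epsilon$. *)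

(* Defs.v *)
From Stdlib Require Import Reals.
Open Scope R_scope.

Definition deriv_seq (D : nat -> R -> R) : Prop :=
  forall (n : nat) (x : R), derivable_pt_lim (D n) x (D (S n) x).

Definition deriv_on (a b : R) (f f' : R -> R) : Prop :=
  forall x, a <= x <= b ->
    forall eps, 0 < eps -> exists delta, 0 < delta /\
      forall h, h <> 0 -> a <= x + h <= b -> Rabs h < delta ->
        Rabs ((f (x + h) - f x) / h - f' x) < eps.

Definition deriv_seq_on (a b : R) (D : nat -> R -> R) : Prop :=
  forall n : nat, deriv_on a b (D n) (D (S n)).

Definition smooth_on (a b : R) (f : R -> R) : Prop :=
  exists D : nat -> R -> R,
    (forall x, a <= x <= b -> D 0%nat x = f x) /\ deriv_seq_on a b D.

Definition pfun (q q' q'' : R -> R) (t : R) : R :=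
  / q t * (5 / 4 * (q' t / q t) ^ 2 - q'' t / q t).

(* Main.v *)
Require Import Defs.
From Stdlib Require Import Reals Lra Lia.
From Stdlib Require Import ClassicalEpsilon.
From Coquelicot Require Import Coquelicot.
Open Scope R_scope.
Definition Dom (x h : R) : Prop := h <> 0 /\ 0 <= x + h <= 1.
Definition Fw (x : R) := within (Dom x) (locally 0).

Definition LimE (x : R) (phi : R -> R) (l : R) : Prop :=
  forall eps, 0 < eps -> exists delta, 0 < delta /\
    forall h, h <> 0 -> 0 <= x + h <= 1 -> Rabs h < delta -> Rabs (phi h - l) < eps.

Lemma ballR (x e y : R) : ball x e y <-> Rabs (y - x) < e.
Proof. unfold ball; simpl; unfold AbsRing_ball, abs, minus, plus, opp; simpl. tauto. Qed.

Lemma LimE_filter x phi l : LimE x phi l <-> filterlim phi (Fw x) (locally l).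
Proof.
  split.
  - intros H. apply filterlim_locally. intros eps.
    destruct (H eps (cond_pos eps)) as [d [Hd Hh]].
    exists (mkposreal d Hd). intros y Hy [Hy0 Hy1]. apply ballR.
    apply ballR in Hy. apply Hh; auto. simpl in Hy. replace y with (y - 0) by ring. exact Hy.
  - intros H eps Heps. apply filterlim_locally with (eps := mkposreal eps Heps) in H.
    destruct H as [d Hd]. exists d. split. apply cond_pos.
    intros h H0 H1 H2. apply ballR. apply Hd. apply ballR. now rewrite Rminus_0_r.
    split; auto.
Qed.

Instance Fw_filter x : Filter (Fw x).
Proof. unfold Fw. apply within_filter. apply locally_filter. Qed.

Definition quot (f : R -> R) (x h : R) := (f (x + h) - f x) / h.

Lemma deriv_on_Lim f f' : deriv_on 0 1 f f' <->
  forall x, 0 <= x <= 1 -> filterlim (quot f x) (Fw x) (locally (f' x)).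
Proof.
  split.
  - intros H x Hx. apply LimE_filter. intros eps Heps.
    destruct (H x Hx eps Heps) as [d [Hd Hh]]. exists d; split; auto.
  - intros H x Hx eps Heps. specialize (H x Hx). apply LimE_filter in H.
    destruct (H eps Heps) as [d [Hd Hh]]. exists d; split; auto.
Qed.

Lemma Fw_h x : filterlim (fun h => h) (Fw x) (locally 0).
Proof.
  apply LimE_filter. intros eps Heps. exists eps; split; auto.
  intros h _ _ H. now rewrite Rminus_0_r.
Qed.

Lemma Fw_ev x : Fw x (fun h => Dom x h).
Proof. unfold Fw, within. apply filter_forall. auto. Qed.

Lemma lim_plus {F} {FF : Filter F} (f g : R -> R) a b :
  filterlim f F (locally a) -> filterlim g F (locally b) ->
  filterlim (fun x => f x + g x) F (locally (a + b)).
Proof. intros Hf Hg. eapply filterlim_comp_2; eauto. apply (filterlim_plus a b). Qed.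

Lemma lim_mult {F} {FF : Filter F} (f g : R -> R) a b :
  filterlim f F (locally a) -> filterlim g F (locally b) ->
  filterlim (fun x => f x * g x) F (locally (a * b)).
Proof. intros Hf Hg. eapply filterlim_comp_2; eauto. apply (filterlim_mult a b). Qed.

Lemma lim_opp {F} {FF : Filter F} (f : R -> R) a :
  filterlim f F (locally a) -> filterlim (fun x => - f x) F (locally (- a)).
Proof. intros Hf. eapply filterlim_comp; eauto. apply (filterlim_opp a). Qed.

Lemma lim_inv {F} {FF : Filter F} (f : R -> R) a : a <> 0 ->
  filterlim f F (locally a) -> filterlim (fun x => / f x) F (locally (/ a)).
Proof.
  intros Ha Hf. eapply filterlim_comp; eauto.
  apply continuity_pt_filterlim. apply continuity_pt_inv; auto. apply continuity_pt_id.
Qed.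

Lemma deriv_cont f f' x : 0 <= x <= 1 -> deriv_on 0 1 f f' ->
  filterlim (fun h => f (x + h)) (Fw x) (locally (f x)).
Proof.
  intros Hx H. apply deriv_on_Lim with (x := x) in H; auto.
  assert (H2 := lim_mult _ _ _ _ H (Fw_h x)).
  assert (H3 := lim_plus _ _ _ _ H2 (filterlim_const (F := Fw x) (f x))).
  replace (f' x * 0 + f x) with (f x) in H3 by ring.
  eapply filterlim_ext_loc; [|exact H3]. simpl.
  eapply filter_imp; [|apply Fw_ev]. intros h [Hh _]. unfold quot. field. auto.
Qed.

Lemma deriv_on_mult f f' g g' : deriv_on 0 1 f f' -> deriv_on 0 1 g g' ->
  deriv_on 0 1 (fun x => f x * g x) (fun x => f' x * g x + f x * g' x).
Proof.
  intros Hf Hg. apply deriv_on_Lim. intros x Hx.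
  assert (A := proj1 (deriv_on_Lim _ _) Hf x Hx).
  assert (B := proj1 (deriv_on_Lim _ _) Hg x Hx).
  assert (C := deriv_cont _ _ x Hx Hg).
  assert (D := lim_plus _ _ _ _ (lim_mult _ _ _ _ A C)
     (lim_mult _ _ _ _ (filterlim_const (F := Fw x) (f x)) B)).
  eapply filterlim_ext_loc; [|exact D]. simpl.
  eapply filter_imp; [|apply Fw_ev]. intros h [Hh _]. unfold quot. field. auto.
Qed.

Lemma deriv_on_plus f f' g g' : deriv_on 0 1 f f' -> deriv_on 0 1 g g' ->
  deriv_on 0 1 (fun x => f x + g x) (fun x => f' x + g' x).
Proof.
  intros Hf Hg. apply deriv_on_Lim. intros x Hx.
  assert (A := proj1 (deriv_on_Lim _ _) Hf x Hx).
  assert (B := proj1 (deriv_on_Lim _ _) Hg x Hx).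
  assert (D := lim_plus _ _ _ _ A B).
  eapply filterlim_ext_loc; [|exact D]. simpl.
  eapply filter_imp; [|apply Fw_ev]. intros h [Hh _]. unfold quot. field. auto.
Qed.

Lemma deriv_on_const c : deriv_on 0 1 (fun _ => c) (fun _ => 0).
Proof.
  intros x _ eps Heps. exists 1. split. lra. intros h H0 _ _.
  replace ((c - c)/h - 0) with 0 by (field; auto). rewrite Rabs_R0; auto.
Qed.

Lemma deriv_on_inv f f' : (forall x, 0 <= x <= 1 -> f x <> 0) -> deriv_on 0 1 f f' ->
  deriv_on 0 1 (fun x => / f x) (fun x => - f' x * / f x * / f x).
Proof.
  intros Hnz Hf. apply deriv_on_Lim. intros x Hx.
  assert (A := proj1 (deriv_on_Lim _ _) Hf x Hx).
  assert (C := lim_inv _ _ (Hnz x Hx) (deriv_cont _ _ x Hx Hf)).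
  assert (D := lim_mult _ _ _ _ (lim_mult _ _ _ _ (lim_opp _ _ A) C)
     (filterlim_const (F := Fw x) (/ f x))).
  eapply filterlim_ext_loc; [|exact D]. simpl.
  eapply filter_imp; [|apply Fw_ev]. intros h [Hh Hd]. unfold quot.
  assert (f (x + h) <> 0) by (apply Hnz; auto). assert (f x <> 0) by auto.
  field. auto.
Qed.

Lemma deriv_on_ext f f' g g' : (forall x, 0 <= x <= 1 -> f x = g x) ->
  (forall x, 0 <= x <= 1 -> f' x = g' x) -> deriv_on 0 1 f f' -> deriv_on 0 1 g g'.
Proof.
  intros E E' H x Hx eps Heps. destruct (H x Hx eps Heps) as [d [Hd Hh]].
  exists d; split; auto. intros h H0 H1 H2. rewrite <- (E x Hx), <- (E (x+h) H1), <- (E' x Hx).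
  auto.
Qed.

Lemma deriv_on_of_lim f f' : (forall x, 0 <= x <= 1 -> derivable_pt_lim f x (f' x)) ->
  deriv_on 0 1 f f'.
Proof.
  intros H x Hx eps Heps. destruct (H x Hx eps Heps) as [d Hd]. exists d.
  split. apply cond_pos. intros h H0 _ H2. auto.
Qed.

Lemma deriv_on_unique f f1 f2 : deriv_on 0 1 f f1 -> deriv_on 0 1 f f2 ->
  forall x, 0 <= x <= 1 -> f1 x = f2 x.
Proof.
  intros H1 H2 x Hx. apply Rle_antisym; apply Rle_plus_epsilon; intros e He.
  - destruct (H1 x Hx (e/2) ltac:(lra)) as [d1 [Hd1 A]].
    destruct (H2 x Hx (e/2) ltac:(lra)) as [d2 [Hd2 B]].
    set (h := Rmin (Rmin d1 d2 / 2) (1/2)).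
    assert (hp : 0 < h). { unfold h. apply Rmin_glb_lt; [|lra]. assert (0 < Rmin d1 d2) by (apply Rmin_pos; auto). lra. }
    assert (hd1 : h < d1). { unfold h. assert (Rmin d1 d2 <= d1) by apply Rmin_l. assert (Rmin (Rmin d1 d2 / 2) (1/2) <= Rmin d1 d2 / 2) by apply Rmin_l. assert (0 < Rmin d1 d2) by (apply Rmin_pos; auto). lra. }
    assert (hd2 : h < d2). { unfold h. assert (Rmin d1 d2 <= d2) by apply Rmin_r. assert (Rmin (Rmin d1 d2 / 2) (1/2) <= Rmin d1 d2 / 2) by apply Rmin_l. assert (0 < Rmin d1 d2) by (apply Rmin_pos; auto). lra. }
    assert (hh : h <= 1/2) by (unfold h; apply Rmin_r).
    destruct (Rle_dec x (1/2)) as [Hx2|Hx2].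
    + specialize (A h ltac:(lra) ltac:(lra) ltac:(rewrite Rabs_pos_eq; lra)).
      specialize (B h ltac:(lra) ltac:(lra) ltac:(rewrite Rabs_pos_eq; lra)).
      apply Rabs_def2 in A. apply Rabs_def2 in B. lra.
    + specialize (A (-h) ltac:(lra) ltac:(lra) ltac:(rewrite Rabs_Ropp, Rabs_pos_eq; lra)).
      specialize (B (-h) ltac:(lra) ltac:(lra) ltac:(rewrite Rabs_Ropp, Rabs_pos_eq; lra)).
      apply Rabs_def2 in A. apply Rabs_def2 in B. lra.
  - destruct (H1 x Hx (e/2) ltac:(lra)) as [d1 [Hd1 A]].
    destruct (H2 x Hx (e/2) ltac:(lra)) as [d2 [Hd2 B]].
    set (h := Rmin (Rmin d1 d2 / 2) (1/2)).
    assert (hp : 0 < h). { unfold h. apply Rmin_glb_lt; [|lra]. assert (0 < Rmin d1 d2) by (apply Rmin_pos; auto). lra. }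
    assert (hd1 : h < d1). { unfold h. assert (Rmin d1 d2 <= d1) by apply Rmin_l. assert (Rmin (Rmin d1 d2 / 2) (1/2) <= Rmin d1 d2 / 2) by apply Rmin_l. assert (0 < Rmin d1 d2) by (apply Rmin_pos; auto). lra. }
    assert (hd2 : h < d2). { unfold h. assert (Rmin d1 d2 <= d2) by apply Rmin_r. assert (Rmin (Rmin d1 d2 / 2) (1/2) <= Rmin d1 d2 / 2) by apply Rmin_l. assert (0 < Rmin d1 d2) by (apply Rmin_pos; auto). lra. }
    assert (hh : h <= 1/2) by (unfold h; apply Rmin_r).
    destruct (Rle_dec x (1/2)) as [Hx2|Hx2].
    + specialize (A h ltac:(lra) ltac:(lra) ltac:(rewrite Rabs_pos_eq; lra)).
      specialize (B h ltac:(lra) ltac:(lra) ltac:(rewrite Rabs_pos_eq; lra)).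
      apply Rabs_def2 in A. apply Rabs_def2 in B. lra.
    + specialize (A (-h) ltac:(lra) ltac:(lra) ltac:(rewrite Rabs_Ropp, Rabs_pos_eq; lra)).
      specialize (B (-h) ltac:(lra) ltac:(lra) ltac:(rewrite Rabs_Ropp, Rabs_pos_eq; lra)).
      apply Rabs_def2 in A. apply Rabs_def2 in B. lra.
Qed.
Fixpoint Ck (n : nat) (f : R -> R) : Prop :=
  match n with O => True | S n => exists f', deriv_on 0 1 f f' /\ Ck n f' end.

Lemma Ck_ext n : forall f g, (forall x, 0 <= x <= 1 -> f x = g x) -> Ck n f -> Ck n g.
Proof.
  induction n as [|n IH]; simpl; auto. intros f g E [f' [H1 H2]]. exists f'.
  split; auto. eapply deriv_on_ext; eauto.
Qed.

Lemma Ck_mono n : forall f, Ck (S n) f -> Ck n f.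
Proof.
  induction n as [|n IH]; simpl; auto. intros f [f' [H1 H2]]. exists f'. split; auto.
Qed.

Lemma Ck_const n : forall c, Ck n (fun _ => c).
Proof.
  induction n as [|n IH]; simpl; auto. intros c. exists (fun _ => 0). split.
  apply deriv_on_const. apply IH.
Qed.

Lemma Ck_plus n : forall f g, Ck n f -> Ck n g -> Ck n (fun x => f x + g x).
Proof.
  induction n as [|n IH]; simpl; auto. intros f g [f' [H1 H2]] [g' [H3 H4]].
  exists (fun x => f' x + g' x). split. apply deriv_on_plus; auto. apply IH; auto.
Qed.

Lemma Ck_mult n : forall f g, Ck n f -> Ck n g -> Ck n (fun x => f x * g x).
Proof.
  induction n as [|n IH]; simpl; auto. intros f g Hf Hg.
  destruct Hf as [f' [H1 H2]]. destruct Hg as [g' [H3 H4]].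
  exists (fun x => f' x * g x + f x * g' x). split. apply deriv_on_mult; auto.
  apply Ck_plus; apply IH; auto; apply Ck_mono; simpl; eauto.
Qed.

Lemma Ck_opp n f : Ck n f -> Ck n (fun x => - f x).
Proof.
  intros H. apply Ck_ext with (fun x => (-1) * f x). intros; ring.
  apply Ck_mult; auto. apply Ck_const.
Qed.

Lemma Ck_inv n : forall f, (forall x, 0 <= x <= 1 -> f x <> 0) -> Ck n f -> Ck n (fun x => / f x).
Proof.
  induction n as [|n IH]; simpl; auto. intros f Hnz Hf.
  assert (Hf0 : Ck n f) by (apply Ck_mono; exact Hf).
  destruct Hf as [f' [H1 H2]].
  exists (fun x => - f' x * / f x * / f x). split. apply deriv_on_inv; auto.
  apply Ck_mult; [apply Ck_mult|]; auto. apply Ck_opp; auto.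
Qed.

Lemma Ck_seq (D : nat -> R -> R) : deriv_seq_on 0 1 D -> forall n k, Ck n (D k).
Proof.
  intros H n. induction n as [|n IH]; simpl; auto. intros k. exists (D (S k)). auto.
Qed.

Lemma chain_of_Ck n : forall f, Ck n f -> exists D : nat -> R -> R,
  (forall x, 0 <= x <= 1 -> D 0%nat x = f x) /\
  forall m, (m < n)%nat -> deriv_on 0 1 (D m) (D (S m)).
Proof.
  induction n as [|n IH]; simpl.
  - intros f _. exists (fun _ => f). split; auto. intros m Hm; lia.
  - intros f [f' [H1 H2]]. destruct (IH f' H2) as [E [E0 HE]].
    exists (fun k => match k with O => f | S k => E k end). split; auto.
    intros m Hm. destruct m as [|m].
    + eapply deriv_on_ext; [| |exact H1]; auto. intros; symmetry; auto.
    + apply HE. lia.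
Qed.

Lemma chains_agree (D E : nat -> R -> R) n :
  (forall x, 0 <= x <= 1 -> D 0%nat x = E 0%nat x) ->
  (forall m, (m < n)%nat -> deriv_on 0 1 (D m) (D (S m))) ->
  (forall m, (m < n)%nat -> deriv_on 0 1 (E m) (E (S m))) ->
  forall k, (k <= n)%nat -> forall x, 0 <= x <= 1 -> D k x = E k x.
Proof.
  intros H0 HD HE k. induction k as [|k IH]; auto. intros Hk x Hx.
  apply (deriv_on_unique (D k) (D (S k)) (E (S k))); [apply HD; lia | | exact Hx].
  apply deriv_on_ext with (E k) (E (S k)); [intros; symmetry; apply IH; auto; lia | intros; reflexivity | apply HE; lia].
Qed.

Lemma smooth_of_Ck f : (forall n, Ck n f) -> exists D : nat -> R -> R,
  (forall x, 0 <= x <= 1 -> D 0%nat x = f x) /\ deriv_seq_on 0 1 D.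
Proof.
  intros H.
  set (C := fun n => proj1_sig (constructive_indefinite_description _ (chain_of_Ck n f (H n)))).
  assert (HC : forall n, (forall x, 0 <= x <= 1 -> C n 0%nat x = f x) /\
     forall m, (m < n)%nat -> deriv_on 0 1 (C n m) (C n (S m))).
  { intros n. unfold C. destruct (constructive_indefinite_description _ _) as [D HD]. exact HD. }
  exists (fun n => C (S n) n). split.
  - intros x Hx. apply (proj1 (HC 1%nat)); auto.
  - intros n. simpl.
    apply deriv_on_ext with (C (S (S n)) n) (C (S (S n)) (S n)).
    + intros x Hx. apply (chains_agree _ _ (S n)); auto.
      * intros y Hy. rewrite (proj1 (HC _) y Hy), (proj1 (HC _) y Hy). auto.
      * intros m Hm. apply (proj2 (HC _)). lia.
      * apply (proj2 (HC _)).
    + auto.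
    + apply (proj2 (HC _)). lia.
Qed.
Lemma abs_le_inv x y : Rabs x <= y -> - y <= x <= y.
Proof. unfold Rabs; destruct Rcase_abs; lra. Qed.

Lemma dpl_minus f g x a b : derivable_pt_lim f x a -> derivable_pt_lim g x b ->
  derivable_pt_lim (fun t => f t - g t) x (a - b).
Proof. intros; now apply (derivable_pt_lim_minus f g). Qed.
Lemma dpl_plus f g x a b : derivable_pt_lim f x a -> derivable_pt_lim g x b ->
  derivable_pt_lim (fun t => f t + g t) x (a + b).
Proof. intros; now apply (derivable_pt_lim_plus f g). Qed.
Lemma dpl_const c x : derivable_pt_lim (fun _ => c) x 0.
Proof. apply (derivable_pt_lim_const c). Qed.
Lemma dpl_eq f x a b : derivable_pt_lim f x a -> a = b -> derivable_pt_lim f x b.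
Proof. intros H ->; auto. Qed.
Lemma dpl_cont f x a : derivable_pt_lim f x a -> continuity_pt f x.
Proof. intros H. apply derivable_continuous_pt. exists a. exact H. Qed.

Lemma nonneg_of_deriv f f' : (forall t, 0 <= t <= 1 -> derivable_pt_lim f t (f' t)) ->
  0 <= f 0 -> (forall t, 0 <= t <= 1 -> 0 <= f' t) -> forall t, 0 <= t <= 1 -> 0 <= f t.
Proof.
  intros Hd H0 Hp t Ht. destruct (Req_dec t 0) as [->|Hn]; auto.
  destruct (MVT_cor2 f f' 0 t ltac:(lra)) as [c [Hc1 Hc2]].
  intros c Hc; apply Hd; lra.
  assert (0 <= f' c) by (apply Hp; lra). nra.
Qed.

Lemma cmp_lemma d d1 d2 g g1 g2 :
  (forall t, 0 <= t <= 1 -> derivable_pt_lim d t (d1 t)) ->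
  (forall t, 0 <= t <= 1 -> derivable_pt_lim d1 t (d2 t)) ->
  (forall t, 0 <= t <= 1 -> derivable_pt_lim g t (g1 t)) ->
  (forall t, 0 <= t <= 1 -> derivable_pt_lim g1 t (g2 t)) ->
  d 0 = 0 -> d1 0 = 0 -> g 0 = 0 -> g1 0 = 0 ->
  (forall t, 0 <= t <= 1 -> Rabs (d2 t) <= g2 t) ->
  forall t, 0 <= t <= 1 -> Rabs (d t) <= g t.
Proof.
  intros Hd Hd1 Hg Hg1 e0 e1 e2 e3 Hb.
  assert (A : forall t, 0 <= t <= 1 -> 0 <= g1 t - d1 t).
  { apply nonneg_of_deriv with (fun t => g2 t - d2 t). intros; apply dpl_minus; auto.
    lra. intros t Ht. specialize (Hb t Ht). apply abs_le_inv in Hb. lra. }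
  assert (B : forall t, 0 <= t <= 1 -> 0 <= g1 t + d1 t).
  { apply nonneg_of_deriv with (fun t => g2 t + d2 t). intros; apply dpl_plus; auto.
    lra. intros t Ht. specialize (Hb t Ht). apply abs_le_inv in Hb. lra. }
  assert (C : forall t, 0 <= t <= 1 -> 0 <= g t - d t).
  { apply nonneg_of_deriv with (fun t => g1 t - d1 t). intros; apply dpl_minus; auto.
    lra. auto. }
  assert (D : forall t, 0 <= t <= 1 -> 0 <= g t + d t).
  { apply nonneg_of_deriv with (fun t => g1 t + d1 t). intros; apply dpl_plus; auto.
    lra. auto. }
  intros t Ht. specialize (C t Ht). specialize (D t Ht). apply Rabs_le. lra.
Qed.

Definition mono (c : R) (k : nat) (t : R) := c * t ^ k / INR (Factorial.fact k).

Lemma mono_deriv c k t : derivable_pt_lim (mono c (S k)) t (mono c k t).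
Proof.
  unfold mono.
  assert (H := derivable_pt_lim_scal _ (c / INR (Factorial.fact (S k))) _ _ (derivable_pt_lim_pow t (S k))).
  eapply dpl_eq. eapply derivable_pt_lim_ext; [|exact H]. intros x; unfold mult_real_fct. field.
  apply INR_fact_neq_0.
  simpl pred. rewrite fact_simpl, mult_INR. field. split. apply INR_fact_neq_0.
  rewrite S_INR. pose proof (pos_INR k). lra.
Qed.

Lemma mono_0 c k : mono c (S k) 0 = 0.
Proof. unfold mono. rewrite pow_i by lia. unfold Rdiv. ring. Qed.

Lemma mono_O c t : mono c 0 t = c.
Proof. unfold mono. simpl. field. Qed.

Lemma mono_le c k t : 0 <= c -> 0 <= t <= 1 -> mono c k t <= c / INR (Factorial.fact k).
Proof.
  intros Hc Ht. unfold mono. unfold Rdiv. apply Rmult_le_compat_r.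
  left. apply Rinv_0_lt_compat. apply INR_fact_lt_0.
  rewrite <- (Rmult_1_r c) at 2. apply Rmult_le_compat_l; auto.
  rewrite <- (pow1 k). apply pow_incr. lra.
Qed.
Lemma cont_lip h u x : (forall y z, Rabs (h y - h z) <= Rabs (u y - u z)) ->
  continuity_pt u x -> continuity_pt h x.
Proof.
  intros Hl Hu eps Heps. destruct (Hu eps Heps) as [alp [Ha Hb]].
  exists alp; split; auto. intros y Hy. specialize (Hb y Hy).
  unfold dist in *; simpl in *; unfold R_dist in *. eapply Rle_lt_trans; [apply Hl|]; auto.
Qed.

Lemma cp_mult f g x : continuity_pt f x -> continuity_pt g x -> continuity_pt (fun t => f t * g t) x.
Proof. intros; now apply (continuity_pt_mult f g). Qed.
Lemma cp_plus f g x : continuity_pt f x -> continuity_pt g x -> continuity_pt (fun t => f t + g t) x.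
Proof. intros; now apply (continuity_pt_plus f g). Qed.
Lemma cp_div f g x : continuity_pt f x -> continuity_pt g x -> g x <> 0 -> continuity_pt (fun t => f t / g t) x.
Proof. intros; now apply (continuity_pt_div f g). Qed.
Lemma cp_const c x : continuity_pt (fun _ => c) x.
Proof. apply (continuity_pt_const (fun _ => c)). intros a b; auto. Qed.

Definition clamp (t : R) := Rmax 0 (Rmin 1 t).
Lemma clamp_in t : 0 <= clamp t <= 1.
Proof. unfold clamp, Rmax, Rmin. repeat destruct Rle_dec; lra. Qed.
Lemma clamp_id t : 0 <= t <= 1 -> clamp t = t.
Proof. intros. unfold clamp, Rmax, Rmin. repeat destruct Rle_dec; lra. Qed.
Lemma clamp_lip y z : Rabs (clamp y - clamp z) <= Rabs (y - z).
Proof. unfold clamp, Rmax, Rmin. repeat destruct Rle_dec; unfold Rabs; repeat destruct Rcase_abs; lra. Qed.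
Lemma Rmax_lip a b m : Rabs (Rmax a m - Rmax b m) <= Rabs (a - b).
Proof. unfold Rmax. repeat destruct Rle_dec; unfold Rabs; repeat destruct Rcase_abs; lra. Qed.

Definition WCont (f : R -> R) := forall x, 0 <= x <= 1 -> forall eps, 0 < eps ->
  exists d, 0 < d /\ forall y, 0 <= y <= 1 -> Rabs (y - x) < d -> Rabs (f y - f x) < eps.

Lemma WCont_of_deriv f f' : deriv_on 0 1 f f' -> WCont f.
Proof.
  intros H x Hx eps Heps. assert (A := deriv_cont f f' x Hx H).
  apply LimE_filter in A. destruct (A eps Heps) as [d [Hd B]]. exists d; split; auto.
  intros y Hy Hyx. destruct (Req_dec y x) as [->|Hn].
  rewrite Rminus_diag, Rabs_R0; auto.
  specialize (B (y - x) ltac:(lra)). replace (x + (y - x)) with y in B by ring. apply B; auto.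
Qed.

Lemma cont_clamp f : WCont f -> forall x, continuity_pt (fun t => f (clamp t)) x.
Proof.
  intros H x eps Heps. destruct (H (clamp x) (clamp_in x) eps Heps) as [d [Hd B]].
  exists d; split; auto. intros y [_ Hy]. unfold dist in *; simpl in *; unfold R_dist in *.
  apply B. apply clamp_in. eapply Rle_lt_trans; [apply clamp_lip|]; auto.
Qed.

Definition Mx (m : R) (u : R -> R) r := Rmax (u r) m.
Definition Gf (pe : R -> R) (m : R) (u : R -> R) (r : R) :=
  pe r / (4 * (Mx m u r * Mx m u r * Mx m u r)).
Definition T (a b : R) (pe : R -> R) (m : R) (u : R -> R) (t : R) :=
  a + RInt (fun s => b + RInt (Gf pe m u) 0 s) 0 t.

Lemma Mx_ge m u r : m <= Mx m u r.
Proof. unfold Mx. apply Rmax_r. Qed.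

Lemma Gf_cont pe m u : 0 < m -> (forall x, continuity_pt pe x) -> (forall x, continuity_pt u x) ->
  forall x, continuity_pt (Gf pe m u) x.
Proof.
  intros Hm Hpe Hu x. unfold Gf. assert (HM : continuity_pt (Mx m u) x).
  { apply cont_lip with u; auto. intros; apply Rmax_lip. }
  apply cp_div; auto. apply cp_mult. apply cp_const. apply cp_mult; auto. apply cp_mult; auto.
  assert (m <= Mx m u x) by apply Mx_ge.
  assert (0 < Mx m u x * Mx m u x * Mx m u x) by (repeat apply Rmult_lt_0_compat; lra). lra.
Qed.

Lemma prim_deriv g : (forall x, continuity_pt g x) ->
  forall t, derivable_pt_lim (fun s => RInt g 0 s) t (g t).
Proof.
  intros Hg t. apply is_derive_Reals. apply is_derive_RInt with (a := 0).
  - apply filter_forall. intros y. apply (RInt_correct g). apply ex_RInt_continuous.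
    intros z _. apply continuity_pt_filterlim. auto.
  - apply continuity_pt_filterlim. auto.
Qed.

Lemma T_deriv a b pe m u : 0 < m -> (forall x, continuity_pt pe x) -> (forall x, continuity_pt u x) ->
  forall t, derivable_pt_lim (T a b pe m u) t (b + RInt (Gf pe m u) 0 t) /\
            derivable_pt_lim (fun s => b + RInt (Gf pe m u) 0 s) t (Gf pe m u t).
Proof.
  intros Hm Hpe Hu.
  assert (D2 : forall t, derivable_pt_lim (fun s => b + RInt (Gf pe m u) 0 s) t (Gf pe m u t)).
  { intros t. eapply dpl_eq. apply dpl_plus. apply dpl_const. apply prim_deriv.
    apply Gf_cont; auto. ring. }
  intros t; split; auto. unfold T. eapply dpl_eq. apply dpl_plus. apply dpl_const.
  apply prim_deriv. intros x. eapply dpl_cont. apply D2. ring.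
Qed.

Lemma RInt0 (g : R -> R) : RInt g 0 0 = 0.
Proof. rewrite RInt_point. reflexivity. Qed.

Lemma T_0 a b pe m u : T a b pe m u 0 = a.
Proof. unfold T. rewrite RInt0. ring. Qed.

Lemma T_cont a b pe m u : 0 < m -> (forall x, continuity_pt pe x) -> (forall x, continuity_pt u x) ->
  forall x, continuity_pt (T a b pe m u) x.
Proof. intros H H0 H1 x. eapply dpl_cont. apply (proj1 (T_deriv a b pe m u H H0 H1 x)). Qed.
Fixpoint ws (a b : R) (pe : R -> R) (m : R) (w0 : R -> R) (n : nat) : R -> R :=
  match n with O => w0 | S n => T a b pe m (ws a b pe m w0 n) end.

Definition ee (L : R) (n : nat) := L ^ n / INR (Factorial.fact n).
Fixpoint Pp (L : R) (n : nat) : R := match n with O => 0 | S n => Pp L n + ee L n end.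

Lemma Pp_sum L n : Pp L (S n) = sum_f_R0 (fun i => / INR (Factorial.fact i) * L ^ i) n.
Proof.
  induction n as [|n IH]. unfold Pp, ee, sum_f_R0. simpl pow. change (Factorial.fact 0) with 1%nat. change (INR 1) with 1. unfold Rdiv. rewrite Rinv_1. ring.
  change (Pp L (S (S n))) with (Pp L (S n) + ee L (S n)). rewrite IH. rewrite tech5. unfold ee. unfold Rdiv. ring.
Qed.

Lemma Pp_cv L : Un_cv (Pp L) (exp L).
Proof.
  unfold exp. destruct (exist_exp L) as [l Hl]. simpl. intros eps Heps.
  destruct (Hl eps Heps) as [N HN]. exists (S N). intros n Hn. destruct n as [|n]. lia.
  rewrite Pp_sum. apply HN. lia.
Qed.

Lemma ee_ge0 L n : 0 <= L -> 0 <= ee L n.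
Proof. intros. unfold ee. apply Rdiv_le_0_compat. apply pow_le; auto. apply INR_fact_lt_0. Qed.

Lemma Pp_grow L : 0 <= L -> Un_growing (Pp L).
Proof. intros HL n. simpl. pose proof (ee_ge0 L n HL). lra. Qed.

Lemma Pp_le L n : 0 <= L -> Pp L n <= exp L.
Proof. intros. apply growing_ineq. apply Pp_grow; auto. apply Pp_cv. Qed.

Lemma Pp_mono L n k : 0 <= L -> Pp L n <= Pp L (n + k).
Proof.
  intros HL. induction k as [|k IH]. rewrite Nat.add_0_r; lra.
  rewrite Nat.add_succ_r. simpl. pose proof (ee_ge0 L (n + k) HL). lra.
Qed.

Lemma lim_le (u : nat -> R) l c B n : Un_cv u l ->
  (forall k, (n <= k)%nat -> Rabs (u k - c) <= B) -> Rabs (l - c) <= B.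
Proof.
  intros Hu Hb. apply Rle_plus_epsilon. intros e He. destruct (Hu e He) as [N HN].
  specialize (HN (max N n) ltac:(lia)). specialize (Hb (max N n) ltac:(lia)).
  unfold R_dist in HN. replace (l - c) with ((l - u (max N n)) + (u (max N n) - c)) by ring.
  eapply Rle_trans. apply Rabs_triang. rewrite <- Rabs_Ropp in HN.
  replace (- (u (max N n) - l)) with (l - u (max N n)) in HN by ring. lra.
Qed.

Lemma mult_mono c L k t : L * mono c k t = mono (c * L) k t.
Proof. unfold mono. field. apply INR_fact_neq_0. Qed.


Lemma picard (a b : R) (pe : R -> R) (m : R) (w0 w0' w0'' : R -> R) (C0 L : R) :
  0 < m -> (forall x, continuity_pt pe x) ->
  (forall t, derivable_pt_lim w0 t (w0' t)) -> (forall t, derivable_pt_lim w0' t (w0'' t)) ->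
  w0 0 = a -> w0' 0 = b -> 0 <= C0 -> 0 <= L ->
  (forall t, 0 <= t <= 1 -> Rabs (Gf pe m w0 t - w0'' t) <= C0) ->
  (forall u v r, Rabs (Gf pe m u r - Gf pe m v r) <= L * Rabs (u r - v r)) ->
  exists W W1 W2 : R -> R,
    (forall t, derivable_pt_lim W t (W1 t)) /\ (forall t, derivable_pt_lim W1 t (W2 t)) /\
    (forall t, 0 <= t <= 1 -> W2 t = Gf pe m W t) /\
    (forall t, 0 <= t <= 1 -> Rabs (W t - w0 t) <= C0 * exp L).
Proof.
  intros Hm Hpe Hd1 Hd2 Ha Hb HC0 HL Hbase Hlip.
  set (w := ws a b pe m w0).
  assert (Hw0c : forall x, continuity_pt w0 x) by (intros; eapply dpl_cont; eauto).
  assert (Hwc : forall n x, continuity_pt (w n) x).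
  { intros n; induction n as [|n IH]; simpl; auto. apply T_cont; auto. }
  assert (Hstep : forall n t, 0 <= t <= 1 ->
     Rabs (w (S n) t - w n t) <= mono (C0 * L ^ n) (S (S (2 * n))) t).
  { intros n. induction n as [|n IH].
    - change (w (S O)) with (T a b pe m w0). change (w O) with w0.
      change (S (S (2 * 0))) with 2%nat. replace (C0 * L ^ 0) with C0 by (simpl; ring).
      apply (cmp_lemma _ (fun t => (b + RInt (Gf pe m w0) 0 t) - w0' t)
                         (fun t => Gf pe m w0 t - w0'' t) _ (mono C0 1) (mono C0 0)).
      + intros t _. apply dpl_minus; auto. apply (T_deriv a b pe m w0 Hm Hpe Hw0c t).
      + intros t _. apply dpl_minus; auto. apply (T_deriv a b pe m w0 Hm Hpe Hw0c t).
      + intros t _. apply mono_deriv.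
      + intros t _. apply mono_deriv.
      + rewrite T_0. lra.
      + rewrite RInt0. lra.
      + apply mono_0.
      + apply mono_0.
      + intros t Ht. rewrite mono_O. auto.
    - change (w (S (S n))) with (T a b pe m (w (S n))).
      change (w (S n)) with (T a b pe m (w n)) at 2.
      apply (cmp_lemma _ (fun t => (b + RInt (Gf pe m (w (S n))) 0 t) - (b + RInt (Gf pe m (w n)) 0 t))
                         (fun t => Gf pe m (w (S n)) t - Gf pe m (w n) t) _
                         (mono (C0 * L ^ S n) (S (S (2 * n)) + 1)) (mono (C0 * L ^ S n) (S (S (2 * n))))).
      + intros t _. apply dpl_minus. apply (T_deriv a b pe m _ Hm Hpe (Hwc (S n)) t).
        apply (T_deriv a b pe m _ Hm Hpe (Hwc n) t).
      + intros t _. apply dpl_minus. apply (T_deriv a b pe m _ Hm Hpe (Hwc (S n)) t).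
        apply (T_deriv a b pe m _ Hm Hpe (Hwc n) t).
      + intros t _. replace (S (S (2 * S n))) with (S (S (S (2 * n)) + 1)) by lia. apply mono_deriv.
      + intros t _. replace (S (S (2 * n)) + 1)%nat with (S (S (S (2 * n)))) by lia. apply mono_deriv.
      + rewrite !T_0. ring.
      + rewrite !RInt0. ring.
      + replace (S (S (2 * S n))) with (S (S (S (2 * n)) + 1)) by lia. apply mono_0.
      + replace (S (S (2 * n)) + 1)%nat with (S (S (S (2 * n)))) by lia. apply mono_0.
      + intros t Ht. eapply Rle_trans. apply Hlip.
        replace (C0 * L ^ S n) with (C0 * L ^ n * L) by (simpl; ring).
        rewrite <- mult_mono. apply Rmult_le_compat_l; auto. }
  assert (Hstep2 : forall n t, 0 <= t <= 1 -> Rabs (w (S n) t - w n t) <= C0 * ee L n).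
  { intros n t Ht. eapply Rle_trans. apply Hstep; auto. eapply Rle_trans. apply mono_le; auto.
    apply Rmult_le_pos; auto. apply pow_le; auto.
    unfold ee, Rdiv. rewrite Rmult_assoc. apply Rmult_le_compat_l; auto.
    apply Rmult_le_compat_l. apply pow_le; auto. apply Rinv_le_contravar. apply INR_fact_lt_0.
    apply le_INR. apply Factorial.fact_le. lia. }
  assert (Hdiff : forall n k t, 0 <= t <= 1 -> Rabs (w (n + k)%nat t - w n t) <= C0 * (Pp L (n + k) - Pp L n)).
  { intros n k t Ht. induction k as [|k IH]. rewrite Nat.add_0_r, Rminus_diag, Rabs_R0. lra.
    rewrite Nat.add_succ_r. replace (w (S (n + k)) t - w n t) with
      ((w (S (n + k)) t - w (n + k)%nat t) + (w (n + k)%nat t - w n t)) by ring.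
    eapply Rle_trans. apply Rabs_triang. simpl Pp. pose proof (Hstep2 (n + k)%nat t Ht). lra. }
  assert (Hcau : forall t, Cauchy_crit (fun n => w n (clamp t))).
  { intros t eps Heps. assert (Hc : Cauchy_crit (Pp L)) by (apply CV_Cauchy; exists (exp L); apply Pp_cv).
    destruct (Hc (eps / (C0 + 1))) as [N HN]. apply Rdiv_lt_0_compat; lra.
    exists N. intros n k Hn Hk. unfold R_dist.
    assert (forall n k, (N <= n)%nat -> (n <= k)%nat -> Rabs (w k (clamp t) - w n (clamp t)) < eps).
    { intros n0 k0 Hn0 Hk0. replace k0 with (n0 + (k0 - n0))%nat by lia.
      eapply Rle_lt_trans. apply Hdiff. apply clamp_in.
      specialize (HN (n0 + (k0 - n0))%nat n0 ltac:(lia) Hn0). unfold R_dist in HN.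
      pose proof (Pp_mono L n0 (k0 - n0) HL). rewrite Rabs_pos_eq in HN by lra.
      apply Rmult_lt_compat_r with (r := C0 + 1) in HN; [|lra].
      unfold Rdiv in HN. rewrite Rmult_assoc, Rinv_l, Rmult_1_r in HN by lra. nra. }
    destruct (Nat.le_ge_cases n k) as [Hnk|Hnk].
    rewrite Rabs_minus_sym. apply H; lia. apply H; lia. }
  set (wl := fun t => proj1_sig (Rcomplete.R_complete _ (Hcau t))).
  assert (Hwl : forall t, Un_cv (fun n => w n (clamp t)) (wl t)).
  { intros t. unfold wl. destruct (Rcomplete.R_complete _ _). simpl. auto. }
  assert (Htail : forall n t, Rabs (wl t - w n (clamp t)) <= C0 * (exp L - Pp L n)).
  { intros n t. apply lim_le with (u := fun k => w k (clamp t)) (n := n); auto.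
    intros k Hk. replace k with (n + (k - n))%nat by lia. eapply Rle_trans. apply Hdiff. apply clamp_in.
    apply Rmult_le_compat_l; auto. pose proof (Pp_le L (n + (k - n)) HL). lra. }
  assert (Htail0 : forall eps, 0 < eps -> exists n, C0 * (exp L - Pp L n) < eps).
  { intros eps Heps. destruct (Pp_cv L (eps / (C0 + 1))) as [N HN]. apply Rdiv_lt_0_compat; lra.
    exists N. specialize (HN N (le_n N)). unfold R_dist in HN. pose proof (Pp_le L N HL).
    rewrite Rabs_left1 in HN by lra.
    apply Rmult_lt_compat_r with (r := C0 + 1) in HN; [|lra].
    unfold Rdiv in HN. rewrite Rmult_assoc, Rinv_l, Rmult_1_r in HN by lra. nra. }
  assert (Hwlc : forall x, continuity_pt wl x).
  { intros x eps Heps. destruct (Htail0 (eps / 3) ltac:(lra)) as [n Hn].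
    assert (Hc : continuity_pt (fun t => w n (clamp t)) x).
    { apply (continuity_pt_comp clamp (w n)). apply cont_lip with (fun t => t).
      intros; apply clamp_lip. apply continuity_pt_id. apply Hwc. }
    destruct (Hc (eps / 3) ltac:(lra)) as [d [Hd Hdd]]. exists d; split; auto.
    intros y Hy. specialize (Hdd y Hy). simpl in *. unfold R_dist in *.
    pose proof (Htail n x). pose proof (Htail n y).
    replace (wl y - wl x) with ((wl y - w n (clamp y)) + (w n (clamp y) - w n (clamp x)) + (w n (clamp x) - wl x)) by ring.
    eapply Rle_lt_trans. eapply Rle_trans. apply Rabs_triang. apply Rplus_le_compat_r. apply Rabs_triang.
    rewrite (Rabs_minus_sym (w n (clamp x))). lra. }
  assert (Hwl01 : forall n t, 0 <= t <= 1 -> Rabs (wl t - w n t) <= C0 * (exp L - Pp L n)).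
  { intros n t Ht. rewrite <- (clamp_id t Ht) at 2. auto. }
  set (W := T a b pe m wl).
  assert (HWfix : forall t, 0 <= t <= 1 -> W t = wl t).
  { intros t Ht. apply Rminus_diag_uniq. apply Rabs_eq_0. apply Rle_antisym; [|apply Rabs_pos].
    apply Rle_plus_epsilon. intros e He. rewrite Rplus_0_l.
    destruct (Htail0 (e / (L / 2 + 1 + 1)) ltac:(apply Rdiv_lt_0_compat; lra)) as [n Hn].
    set (K := L * (C0 * (exp L - Pp L n))).
    assert (A : forall s, 0 <= s <= 1 -> Rabs (W s - w (S n) s) <= mono K 2 s).
    { change (w (S n)) with (T a b pe m (w n)).
      apply (cmp_lemma _ (fun t => (b + RInt (Gf pe m wl) 0 t) - (b + RInt (Gf pe m (w n)) 0 t))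
                         (fun t => Gf pe m wl t - Gf pe m (w n) t) _ (mono K 1) (mono K 0)).
      + intros s _. apply dpl_minus. apply (T_deriv a b pe m _ Hm Hpe Hwlc s).
        apply (T_deriv a b pe m _ Hm Hpe (Hwc n) s).
      + intros s _. apply dpl_minus. apply (T_deriv a b pe m _ Hm Hpe Hwlc s).
        apply (T_deriv a b pe m _ Hm Hpe (Hwc n) s).
      + intros s _. apply mono_deriv.
      + intros s _. apply mono_deriv.
      + unfold W. rewrite !T_0. ring.
      + rewrite !RInt0. ring.
      + apply mono_0.
      + apply mono_0.
      + intros s Hs. rewrite mono_O. eapply Rle_trans. apply Hlip. unfold K.
        apply Rmult_le_compat_l; auto. }
    specialize (A t Ht).
    assert (B : mono K 2 t <= K / 2).
    { eapply Rle_trans. apply mono_le; auto. unfold K. apply Rmult_le_pos; auto.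
      apply Rmult_le_pos; auto. pose proof (Pp_le L n HL). lra. simpl. lra. }
    assert (Cc : Rabs (w (S n) t - wl t) <= C0 * (exp L - Pp L n)).
    { rewrite Rabs_minus_sym. eapply Rle_trans. apply Hwl01; auto.
      apply Rmult_le_compat_l; auto. simpl. pose proof (ee_ge0 L n HL). lra. }
    replace (W t - wl t) with ((W t - w (S n) t) + (w (S n) t - wl t)) by ring.
    eapply Rle_trans. apply Rabs_triang.
    assert (HX : 0 <= C0 * (exp L - Pp L n)) by (apply Rmult_le_pos; auto; pose proof (Pp_le L n HL); lra).
    unfold K in B.
    assert (C0 * (exp L - Pp L n) * (L / 2 + 1 + 1) < e).
    { apply Rmult_lt_compat_r with (r := L / 2 + 1 + 1) in Hn; [|lra].
      replace (e / (L / 2 + 1 + 1) * (L / 2 + 1 + 1)) with e in Hn by (field; lra). exact Hn. }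
    set (X := C0 * (exp L - Pp L n)) in *. assert (0 <= L * X) by (apply Rmult_le_pos; auto).
    assert (X * (L / 2 + 1 + 1) = L * X / 2 + 2 * X) by field. unfold K in A. lra. }
  exists W, (fun t => b + RInt (Gf pe m wl) 0 t), (Gf pe m wl). split; [|split; [|split]].
  - intros t. apply (T_deriv a b pe m _ Hm Hpe Hwlc t).
  - intros t. apply (T_deriv a b pe m _ Hm Hpe Hwlc t).
  - intros t Ht. unfold Gf, Mx. rewrite HWfix; auto.
  - intros t Ht. rewrite HWfix; auto. specialize (Hwl01 O t Ht). change (w O) with w0 in Hwl01. change (Pp L 0) with 0 in Hwl01. rewrite Rminus_0_r in Hwl01. exact Hwl01.
Qed.
Lemma inv_cube_lip m x y : 0 < m -> m <= x -> m <= y ->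
  Rabs (/ (4 * (x * x * x)) - / (4 * (y * y * y))) <= 3 / (4 * (m * m * m * m)) * Rabs (x - y).
Proof.
  intros Hm Hx Hy.
  assert (Hx0 : 0 < x) by lra. assert (Hy0 : 0 < y) by lra.
  replace (/ (4 * (x * x * x)) - / (4 * (y * y * y))) with
    ((y - x) * ((x * x + x * y + y * y) / (4 * (x * x * x) * (y * y * y)))) by (field; lra).
  rewrite Rabs_mult, Rabs_minus_sym. rewrite (Rmult_comm (Rabs (x - y))). apply Rmult_le_compat_r. apply Rabs_pos.
  rewrite Rabs_pos_eq by (apply Rdiv_le_0_compat; [nra| repeat apply Rmult_lt_0_compat; lra]).
  assert (m4 : 0 < m * m * m * m) by (repeat apply Rmult_lt_0_compat; lra).
  assert (x3 : 0 < x * x * x) by (repeat apply Rmult_lt_0_compat; lra).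
  assert (y3 : 0 < y * y * y) by (repeat apply Rmult_lt_0_compat; lra).
  apply Rmult_le_reg_r with (4 * (x * x * x) * (y * y * y) * (4 * (m * m * m * m))).
  repeat apply Rmult_lt_0_compat; lra.
  replace ((x * x + x * y + y * y) / (4 * (x * x * x) * (y * y * y)) *
     (4 * (x * x * x) * (y * y * y) * (4 * (m * m * m * m)))) with
     (4 * ((x * x + x * y + y * y) * (m * m * m * m))) by (field; lra).
  replace (3 / (4 * (m * m * m * m)) * (4 * (x * x * x) * (y * y * y) * (4 * (m * m * m * m)))) with
     (4 * (3 * (x * x * x) * (y * y * y))) by (field; lra).
  apply Rmult_le_compat_l. lra.
  assert (mm : m * m <= x * y) by nra.
  assert (mx : m * m <= x * x) by nra.
  assert (my : m * m <= y * y) by nra.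
  assert (A1 : m * m * m * m <= x * y * (y * y)) by nra.
  assert (A2 : m * m * m * m <= x * y * (x * y)) by nra.
  assert (A3 : m * m * m * m <= x * y * (x * x)) by nra.
  nra.
Qed.

Lemma quart_est m x y : 0 < m -> m <= x -> Rabs (y - x) <= x / 10 ->
  Rabs (/ (x * x * x * x) - / (y * y * y * y)) <= 10 * Rabs (y - x) / (m * m * m * m * m).
Proof.
  intros Hm Hx Hyx.
  assert (Hb : - (x / 10) <= y - x <= x / 10) by (revert Hyx; unfold Rabs; destruct Rcase_abs; lra).
  assert (Hx0 : 0 < x) by lra. assert (Hy0 : 0 < y) by lra.
  set (s := y / x). assert (Hs : y = s * x) by (unfold s; field; lra).
  clearbody s. assert (Hs1 : 9/10 <= s <= 11/10).
  { split; apply Rmult_le_reg_r with x; auto; rewrite <- Hs; lra. }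
  replace (/ (x * x * x * x) - / (y * y * y * y)) with
    ((y - x) * ((y + x) * (y * y + x * x) / (x * x * x * x * (y * y * y * y)))) by (field; lra).
  rewrite Rabs_mult. unfold Rdiv. rewrite (Rmult_comm 10), (Rmult_assoc (Rabs (y - x)) 10).
  apply Rmult_le_compat_l. apply Rabs_pos.
  rewrite Rabs_pos_eq by (apply Rmult_le_pos; [nra|left; apply Rinv_0_lt_compat; repeat apply Rmult_lt_0_compat; lra]).
  rewrite Hs.
  assert (m5 : m * m * m * m * m <= x * x * x * x * x).
  { assert (m * m <= x * x) by nra. assert (m * m * m <= x * x * x) by nra.
    assert (m * m * m * m <= x * x * x * x) by nra. nra. }
  assert (Hm5 : 0 < m * m * m * m * m) by (repeat apply Rmult_lt_0_compat; lra).
  replace ((s * x + x) * (s * x * (s * x) + x * x) * / (x * x * x * x * (s * x * (s * x) * (s * x) * (s * x))))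
    with ((s + 1) * (s * s + 1) / (s * s * s * s) * / (x * x * x * x * x)) by (assert (s <> 0) by (apply Rgt_not_eq; lra); assert (x <> 0) by (apply Rgt_not_eq; lra); field; auto).
  assert (Hsp : (s + 1) * (s * s + 1) / (s * s * s * s) <= 10).
  { assert (s4p : 0 < s * s * s * s) by (repeat apply Rmult_lt_0_compat; lra).
    apply Rmult_le_reg_r with (s * s * s * s). exact s4p. unfold Rdiv.
    rewrite Rmult_assoc, Rinv_l, Rmult_1_r by lra.
    assert (s2 : 81/100 <= s * s <= 121/100) by nra.
    assert (s4 : 6561/10000 <= s * s * s * s) by nra.
    assert ((s + 1) * (s * s + 1) <= 21/10 * (221/100)) by (apply Rmult_le_compat; nra).
    lra. }
  assert (0 < / (x * x * x * x * x)) by (apply Rinv_0_lt_compat; nra).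
  assert (/ (x * x * x * x * x) <= / (m * m * m * m * m)) by (apply Rinv_le_contravar; auto).
  assert (0 <= (s + 1) * (s * s + 1) / (s * s * s * s)).
  { assert (s4p : 0 < s * s * s * s) by (repeat apply Rmult_lt_0_compat; lra).
    apply Rmult_le_pos; [apply Rmult_le_pos; nra|left; apply Rinv_0_lt_compat; exact s4p]. }
  apply Rle_trans with (10 * / (x * x * x * x * x)). apply Rmult_le_compat_r; lra.
  apply Rmult_le_compat_l; lra.
Qed.
Definition f4 x := / sqrt (sqrt x).

Lemma f4_facts x : 0 < x -> 0 < sqrt x /\ 0 < sqrt (sqrt x) /\ sqrt x * sqrt x = x /\
   sqrt (sqrt x) * sqrt (sqrt x) = sqrt x.
Proof.
  intros Hx. assert (0 < sqrt x) by (apply sqrt_lt_R0; auto).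
  split; auto. split. apply sqrt_lt_R0; auto. split; apply sqrt_sqrt; lra.
Qed.

Lemma f4_pos x : 0 < x -> 0 < f4 x.
Proof. intros Hx. destruct (f4_facts x Hx) as [A [B _]]. unfold f4. apply Rinv_0_lt_compat; auto. Qed.

Lemma f4_pow x : 0 < x -> f4 x * f4 x * f4 x * f4 x * x = 1.
Proof.
  intros Hx. destruct (f4_facts x Hx) as [A [B [C D]]]. unfold f4.
  set (r := sqrt (sqrt x)) in *. set (s := sqrt x) in *. clearbody r s.
  rewrite <- C, <- D. field. lra.
Qed.

Lemma f4_deriv x : 0 < x -> derivable_pt_lim f4 x (-(1/4) * f4 x / x).
Proof.
  intros Hx. destruct (f4_facts x Hx) as [A [B [C D]]].
  assert (H1 := derivable_pt_lim_sqrt x Hx).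
  assert (H2 := derivable_pt_lim_sqrt (sqrt x) A).
  assert (H3 := derivable_pt_lim_comp _ _ _ _ _ H1 H2).
  apply is_derive_Reals in H3.
  assert (H4 := is_derive_inv _ _ _ H3 ltac:(unfold comp; lra)).
  apply is_derive_Reals in H4. unfold f4. eapply dpl_eq. exact H4.
  unfold comp. set (r := sqrt (sqrt x)) in *. set (s := sqrt x) in *. clearbody r s.
  rewrite <- C, <- D. field. lra.
Qed.

Lemma dpl_mult f g x a b : derivable_pt_lim f x a -> derivable_pt_lim g x b ->
  derivable_pt_lim (fun t => f t * g t) x (a * g x + f x * b).
Proof. intros; now apply (derivable_pt_lim_mult f g). Qed.
Lemma dpl_div f g x a b : derivable_pt_lim f x a -> derivable_pt_lim g x b -> g x <> 0 ->
  derivable_pt_lim (fun t => f t / g t) x ((a * g x - b * f x) / (g x * g x)).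
Proof. intros. apply dpl_eq with ((a * g x - b * f x) / (g x)²). apply (derivable_pt_lim_div f g); auto. unfold Rsqr; reflexivity. Qed.
Lemma exp_ge1 y : 1 + y <= exp y.
Proof. destruct (Req_dec y 0) as [->|H]. rewrite exp_0; lra. left; apply exp_ineq1; auto. Qed.

Lemma exp4 : 16 <= exp 4.
Proof.
  assert (H := exp_ge1 1). replace 4 with (1 + 1 + 1 + 1) by ring. rewrite !exp_plus.
  assert (2 <= exp 1) by lra. assert (4 <= exp 1 * exp 1) by nra. assert (8 <= exp 1 * exp 1 * exp 1) by nra. nra.
Qed.

Lemma key_ineq y z : 0 <= y -> z <= - y - 4 -> 10 * y * exp z <= 1.
Proof.
  intros Hy Hz. assert (A : exp z <= exp (- y - 4)).
  { destruct (Req_dec z (- y - 4)) as [->|H]. lra. left; apply exp_increasing; lra. }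
  assert (B : exp (- y - 4) * (exp y * exp 4) = 1).
  { rewrite <- exp_plus, <- exp_plus. replace (- y - 4 + (y + 4)) with 0 by ring. apply exp_0. }
  assert (C := exp_ge1 y). assert (D := exp4). assert (E := exp_pos (- y - 4)).
  assert (F : 10 * y <= exp y * exp 4) by nra.
  assert (10 * y * exp z <= 10 * y * exp (- y - 4)) by (apply Rmult_le_compat_l; lra).
  nra.
Qed.

Lemma pow4_lt a b : 0 <= a -> a < b -> a * a * a * a < b * b * b * b.
Proof. intros. assert (a * a < b * b) by nra. assert (0 <= a * a) by nra. nra. Qed.

Lemma dpl_inv g x b : derivable_pt_lim g x b -> g x <> 0 ->
  derivable_pt_lim (fun t => / g t) x (- b / (g x * g x)).
Proof.
  intros H Hg. apply is_derive_Reals in H. apply is_derive_Reals.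
  assert (H1 := is_derive_inv g x b H Hg).
  replace (- b / (g x * g x)) with (- b / g x ^ 2) by (simpl; field; auto). exact H1.
Qed.

Theorem lemma9p1
  (q : R -> R) (Dq : nat -> R -> R)
  (HDq0 : Dq 0%nat = q) (HDq : deriv_seq Dq)
  (Hqpos : forall t, 0 < q t)
  (eta1 eta2 : R) (Heta1 : 0 < eta1) (Heta2 : 0 < eta2)
  (Hqb : forall t, 0 <= t <= 1 -> eta1 <= q t <= eta2)
  (Hpb : forall t, 0 <= t <= 1 -> Rabs (pfun q (Dq 1%nat) (Dq 2%nat) t) <= eta2)
  (Hq'b : forall t, 0 <= t <= 1 -> Rabs (Dq 1%nat t) <= eta2)
  (eps : R) (Heps : 0 < eps < eta1 / 2)
  (pb : R -> R) (Hpbs : smooth_on 0 1 pb)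
  (Hclose : forall t, 0 <= t <= 1 ->
     Rabs (pfun q (Dq 1%nat) (Dq 2%nat) t - pb t)
       <= eps * exp (- (20 * (eta2 / eta1) ^ 2 + 8 * eta2 ^ 2
                        + 10 * (eta2 / eta1) + 1))) :
  exists (qb : R -> R) (Dqb : nat -> R -> R),
    (forall t, 0 <= t <= 1 -> Dqb 0%nat t = qb t) /\ deriv_seq_on 0 1 Dqb /\
    (forall t, 0 <= t <= 1 -> pfun qb (Dqb 1%nat) (Dqb 2%nat) t = pb t) /\
    (forall t, 0 <= t <= 1 -> Rabs (q t - qb t) <= eps).
Proof.
  set (K := 20 * (eta2 / eta1) ^ 2 + 8 * eta2 ^ 2 + 10 * (eta2 / eta1) + 1) in *.
  set (p := pfun q (Dq 1%nat) (Dq 2%nat)) in *.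
  set (q1 := Dq 1%nat) in *. set (q2 := Dq 2%nat) in *.
  assert (Hq : forall t, derivable_pt_lim q t (q1 t)).
  { intros t. rewrite <- HDq0. apply HDq. }
  assert (Hq1 : forall t, derivable_pt_lim q1 t (q2 t)) by (intros; apply HDq).
  set (w0 := fun t => f4 (q t)).
  set (w0' := fun t => -(1/4) * w0 t * q1 t / q t).
  set (w0'' := fun t => (1/4) * w0 t * q t * p t).
  assert (Hw0pos : forall t, 0 < w0 t) by (intros; apply f4_pos; auto).
  assert (Hw0q : forall t, w0 t * w0 t * w0 t * w0 t * q t = 1) by (intros; apply f4_pow; auto).
  assert (Hqn : forall t, q t <> 0) by (intros t; specialize (Hqpos t); lra).
  assert (Hd1 : forall t, derivable_pt_lim w0 t (w0' t)).
  { intros t. eapply dpl_eq. apply (derivable_pt_lim_comp q f4). apply Hq. apply f4_deriv; auto.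
    unfold w0', w0. field; auto. }
  assert (Hd2 : forall t, derivable_pt_lim w0' t (w0'' t)).
  { intros t. unfold w0'. eapply dpl_eq.
    apply dpl_div; [apply dpl_mult; [apply dpl_mult; [apply dpl_const|apply Hd1]|apply Hq1]|apply Hq|auto].
    unfold w0'', w0', p, pfun. field; auto. }
  assert (Hη : eta1 <= eta2) by (destruct (Hqb 0 ltac:(lra)); lra).
  assert (Hρ : 1 <= eta2 / eta1).
  { apply Rmult_le_reg_r with eta1; auto. unfold Rdiv. rewrite Rmult_assoc, Rinv_l, Rmult_1_r; lra. }
  assert (HK : 8 * eta2 ^ 2 + 31 <= K).
  { unfold K. assert (1 <= (eta2 / eta1) ^ 2) by (simpl; nra). lra. }
  set (δ := eps * exp (- K)) in *.
  assert (Hexpk : exp (- K) <= 1).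
  { rewrite <- exp_0. left. apply exp_increasing. assert (0 <= eta2 ^ 2) by (simpl; nra). lra. }
  assert (Hδ : 0 < δ <= eps).
  { unfold δ. split. apply Rmult_lt_0_compat. lra. apply exp_pos. 
    rewrite <- (Rmult_1_r eps) at 2. apply Rmult_le_compat_l; lra. }
  destruct (f4_facts (/ (2 * eta2))) as [Ms1 [Ms2 [Ms3 Ms4]]].
  { apply Rinv_0_lt_compat; lra. }
  set (m := sqrt (sqrt (/ (2 * eta2)))) in *.
  assert (Hm4 : m * m * m * m = / (2 * eta2)) by (replace (m * m * m * m) with ((m * m) * (m * m)) by ring; rewrite Ms4, Ms3; auto).
  clearbody m.
  set (P := eta2 + δ).
  set (L := 3 * P / (4 * (m * m * m * m))).
  set (C0 := δ / (4 * (m * m * m))).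
  assert (HL : L = 3 * P * eta2 / 2) by (unfold L; rewrite Hm4; field; lra).
  destruct Hpbs as [Dp [Hp0 Hps]].
  assert (Hpbd : deriv_on 0 1 pb (Dp 1%nat)).
  { eapply deriv_on_ext; [| |apply (Hps 0%nat)]; auto. }
  set (pe := fun t => pb (clamp t)).
  assert (Hpec : forall x, continuity_pt pe x) by (apply cont_clamp; eapply WCont_of_deriv; eauto).
  assert (Hpbb : forall t, 0 <= t <= 1 -> Rabs (pb t) <= P).
  { intros t Ht. specialize (Hpb t Ht). specialize (Hclose t Ht). unfold P.
    replace (pb t) with (p t + (pb t - p t)) by ring. eapply Rle_trans. apply Rabs_triang.
    rewrite Rabs_minus_sym. lra. }
  assert (Hpeb : forall r, Rabs (pe r) <= P) by (intros r; apply Hpbb; apply clamp_in).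
  assert (Hm : 0 < m) by (rewrite Ms4 in *; auto).
  assert (Hm4p : 0 < m * m * m * m) by (repeat apply Rmult_lt_0_compat; auto).
  assert (Hm3p : 0 < m * m * m) by (repeat apply Rmult_lt_0_compat; auto).
  assert (Hlip : forall u v r, Rabs (Gf pe m u r - Gf pe m v r) <= L * Rabs (u r - v r)).
  { intros u v r. unfold Gf.
    replace (pe r / (4 * (Mx m u r * Mx m u r * Mx m u r)) - pe r / (4 * (Mx m v r * Mx m v r * Mx m v r)))
      with (pe r * (/ (4 * (Mx m u r * Mx m u r * Mx m u r)) - / (4 * (Mx m v r * Mx m v r * Mx m v r))))
      by (unfold Rdiv; ring).
    rewrite Rabs_mult. replace L with (P * (3 / (4 * (m * m * m * m)))) by (unfold L; field; lra).
    rewrite (Rmult_assoc P). apply Rmult_le_compat. apply Rabs_pos. apply Rabs_pos. apply Hpeb.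
    eapply Rle_trans. apply (inv_cube_lip m); auto; apply Mx_ge.
    apply Rmult_le_compat_l. left; apply Rdiv_lt_0_compat; lra. apply Rmax_lip. }
  assert (HP : P <= 3 / 2 * eta2) by (unfold P; lra).
  assert (HL0 : 0 <= L) by (rewrite HL; unfold P; nra).
  assert (HC0 : 0 <= C0) by (unfold C0; left; apply Rdiv_lt_0_compat; lra).
  assert (Hmw : forall t, 0 <= t <= 1 -> m <= 9 / 10 * w0 t).
  { intros t Ht. destruct (Hqb t Ht) as [Hq1b Hq2b]. specialize (Hw0pos t). specialize (Hw0q t).
    set (w := w0 t) in *.
    assert (A : m * m * m * m <= w * w * w * w / 2).
    { rewrite Hm4. replace (w * w * w * w) with (/ q t) by (field_simplify_eq; [lra|auto]).
      replace (/ q t / 2) with (/ (2 * q t)) by (field; auto).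
      apply Rinv_le_contravar. specialize (Hqpos t); lra. lra. }
    destruct (Rle_dec m (9 / 10 * w)) as [H|H]; auto.
    assert (B := pow4_lt (9 / 10 * w) m ltac:(lra) ltac:(lra)).
    assert (0 < w * w * w * w) by (repeat apply Rmult_lt_0_compat; auto). nra. }
  assert (Hbase : forall t, 0 <= t <= 1 -> Rabs (Gf pe m w0 t - w0'' t) <= C0).
  { intros t Ht. specialize (Hmw t Ht). specialize (Hw0pos t). specialize (Hw0q t).
    unfold Gf, Mx. rewrite Rmax_left by lra. unfold pe. rewrite clamp_id by auto.
    unfold w0''. set (w := w0 t) in *.
    assert (Hqt : q t = / (w * w * w * w)) by (field_simplify_eq; [lra|lra]).
    rewrite Hqt. assert (Hw3 : 0 < w * w * w) by (repeat apply Rmult_lt_0_compat; auto).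
    replace (pb t / (4 * (w * w * w)) - 1 / 4 * w * / (w * w * w * w) * p t) with
      ((pb t - p t) / (4 * (w * w * w))) by (field; lra).
    unfold Rdiv. rewrite Rabs_mult. rewrite (Rabs_pos_eq (/ _)) by (left; apply Rinv_0_lt_compat; lra).
    unfold C0. unfold Rdiv. apply Rmult_le_compat. apply Rabs_pos. left; apply Rinv_0_lt_compat; lra.
    rewrite Rabs_minus_sym. apply Hclose; auto.
    apply Rinv_le_contravar. lra.
    assert (m * m <= w * w) by nra. assert (m * m * m <= w * w * w) by nra. lra. }
  destruct (picard (w0 0) (w0' 0) pe m w0 w0' w0'' C0 L Hm Hpec Hd1 Hd2 eq_refl eq_refl HC0 HL0 Hbase Hlip)
    as [W [W1 [W2 [HW1 [HW2 [HW2G HWc]]]]]].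
  set (X := exp (L - K)).
  assert (HXp : 0 < X) by apply exp_pos.
  assert (HZ : 10 * eta2 ^ 2 * X <= 1).
  { apply key_ineq. simpl; nra. rewrite HL. assert (3 * P * eta2 / 2 <= 9 / 4 * (eta2 * eta2)) by nra.
    simpl in HK |- *. nra. }
  assert (HdX : δ * exp L = eps * X).
  { unfold δ, X. unfold Rminus. rewrite exp_plus. ring. }
  set (E := C0 * exp L).
  assert (HEm : E <= m / 10).
  { unfold E, C0. apply Rmult_le_reg_r with (40 * (m * m * m)). lra.
    replace (δ / (4 * (m * m * m)) * exp L * (40 * (m * m * m))) with (10 * (δ * exp L)) by (field; lra).
    replace (m / 10 * (40 * (m * m * m))) with (4 * (m * m * m * m)) by field.
    rewrite HdX, Hm4. apply Rmult_le_reg_r with eta2; auto.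
    replace (4 * / (2 * eta2) * eta2) with 2 by (field; lra).
    assert (eps * eta2 <= eta2 / 2 * eta2) by nra. simpl in HZ. nra. }
  assert (HEe : 10 * E / (m * m * m * m * m) <= eps).
  { unfold E, C0.
    replace (10 * (δ / (4 * (m * m * m)) * exp L) / (m * m * m * m * m)) with
      (10 * (δ * exp L) / (4 * ((m * m * m * m) * (m * m * m * m)))) by (field; lra).
    rewrite HdX, Hm4. replace (10 * (eps * X) / (4 * (/ (2 * eta2) * / (2 * eta2)))) with
      (eps * (10 * (eta2 * eta2) * X)) by (field; lra).
    simpl in HZ. rewrite <- (Rmult_1_r eps) at 2. apply Rmult_le_compat_l; lra. }
  assert (HWw : forall t, 0 <= t <= 1 -> Rabs (W t - w0 t) <= E) by auto.
  assert (HWm : forall t, 0 <= t <= 1 -> m <= W t).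
  { intros t Ht. specialize (HWw t Ht). specialize (Hmw t Ht).
    revert HWw; unfold Rabs; destruct Rcase_abs; intros; lra. }
  assert (HWn : forall t, 0 <= t <= 1 -> W t <> 0) by (intros t Ht; specialize (HWm t Ht); lra).
  assert (HWd : deriv_on 0 1 W W1) by (apply deriv_on_of_lim; auto).
  assert (HW1d : deriv_on 0 1 W1 W2) by (apply deriv_on_of_lim; auto).
  assert (HW2eq : forall t, 0 <= t <= 1 -> (fun t => pb t * (/ W t * / W t * / W t) * / 4) t = W2 t).
  { intros t Ht. rewrite HW2G by auto. unfold Gf, Mx. rewrite Rmax_left by (apply HWm; auto).
    unfold pe. rewrite clamp_id by auto. field. apply HWn; auto. }
  assert (Ckpb : forall n, Ck n pb).
  { intros n. apply Ck_ext with (Dp 0%nat); auto. apply Ck_seq; auto. }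
  assert (CkW : forall n, Ck n W /\ Ck (S n) W).
  { intros n. induction n as [|n [IH1 IH2]].
    - split. exact I. simpl. exists W1. split; auto.
    - split; auto. simpl. exists W1; split; auto. exists W2; split; auto.
      eapply Ck_ext; [exact HW2eq|]. apply Ck_mult; [apply Ck_mult|apply Ck_const]; auto.
      apply Ck_mult; [apply Ck_mult|]; apply Ck_inv; auto. }
  set (qb := fun t => / (W t * W t * W t * W t)).
  assert (Ckqb : forall n, Ck n qb).
  { intros n. unfold qb. apply Ck_inv.
    intros t Ht. specialize (HWn t Ht). repeat apply Rmult_integral_contrapositive_currified; auto.
    repeat apply Ck_mult; apply (proj1 (CkW n)). }
  destruct (smooth_of_Ck qb Ckqb) as [Dqb [HD0 HDs]].
  set (W5 := fun t => W t * W t * W t * W t * W t).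
  set (Q1 := fun t => (-4 * W1 t) / W5 t).
  set (Q2 := fun t => 20 * (W1 t * W1 t) / (W5 t * W t) - 4 * W2 t / W5 t).
  assert (HQ1 : deriv_on 0 1 qb Q1).
  { apply deriv_on_of_lim. intros t Ht. specialize (HWn t Ht). unfold qb. eapply dpl_eq.
    apply dpl_inv. repeat apply dpl_mult; auto. repeat apply Rmult_integral_contrapositive_currified; auto.
    unfold Q1, W5. field. auto. }
  assert (HQ2 : deriv_on 0 1 Q1 Q2).
  { apply deriv_on_of_lim. intros t Ht. specialize (HWn t Ht). unfold Q1. eapply dpl_eq.
    apply dpl_div. apply dpl_mult. apply dpl_const. auto. unfold W5. repeat apply dpl_mult; auto.
    unfold W5. repeat apply Rmult_integral_contrapositive_currified; auto.
    unfold Q2, W5. field. auto. }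
  assert (E1 : forall t, 0 <= t <= 1 -> Dqb 1%nat t = Q1 t).
  { apply (deriv_on_unique qb). eapply deriv_on_ext; [exact HD0| |apply (HDs 0%nat)]. auto. auto. }
  assert (E2 : forall t, 0 <= t <= 1 -> Dqb 2%nat t = Q2 t).
  { apply (deriv_on_unique Q1). eapply deriv_on_ext; [exact E1| |apply (HDs 1%nat)]. auto. auto. }
  exists qb, Dqb. split; [|split; [|split]]; auto.
  - intros t Ht. unfold pfun. rewrite E1, E2 by auto. specialize (HWn t Ht).
    unfold Q1, Q2, W5, qb. rewrite <- HW2eq by auto. field. auto.
  - intros t Ht. specialize (Hw0q t). specialize (Hw0pos t). specialize (Hmw t Ht).
    specialize (HWw t Ht).
    assert (Hqt : q t = / (w0 t * w0 t * w0 t * w0 t)) by (field_simplify_eq; [lra|lra]).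
    rewrite Hqt. unfold qb. eapply Rle_trans. apply (quart_est m); auto. lra. lra.
    eapply Rle_trans; [|exact HEe]. unfold Rdiv. apply Rmult_le_compat_r.
    left; apply Rinv_0_lt_compat; repeat apply Rmult_lt_0_compat; auto. lra.
Qed.
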